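(* Let $(S,\mathcal C)$ be a connectoid and $N,N'$ necklaces of $(S,\mathcal C)$. Then $N$ and $N'$ are equivalent if and only if there is an infinite family $(C_n)_{n\in\mathbb N}$ of pairwise disjoint finite connected sets such that each $C_n$ contains an element of $N$ and an element of $N'$.
   Context: A connectoid is given by a set $S$ and a set $\mathcal F$ of finite subsets of $S$ such that (i) $F\cup F'\in\mathcal F$ whenever $F,F'\in\mathcal F$ and $F\cap F'\neq\emptyset$, and (ii) $\emptyset\in\mathcal F$ and $\{s\}\in\mathcal F$ for every $s\in S$. A set $C\subseteq S$ is connected if for all $x,y\in C$ there is $F\in\mathcal F$ with $F\subseteq C$ and $x,y\in F$; $\mathcal C$ is the set of connected sets. For $S'\subseteq S$, a component of $S'$ is a maximal connected subset of $S'$, and $\mathcal K(S')$ is the set of components of $S'$. A necklace is a connected set $N$ for which there is a family $(H_n)_{n\in\mathbb N}$ of finite connected sets with $N=\bigcup_n H_n$ and $H_i\cap H_j\neq\emptyset$ iff $|i-j|\le 1$. For a necklace $N$ and finite $X\subseteq S$, the $X$-tail of $N$ is the unique element of $\mathcal K(N\setminus X)$ containing all but finitely many elements of $N$. Two necklaces are equivalent if for every finite $X\subseteq S$ their $X$-tails are contained in the same element of $\mathcal K(S\setminus X)$. *)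

(* Defs.v *)
From mathcomp Require Import all_boot.
From mathcomp Require Import boolp classical_sets cardinality.
Set Implicit Arguments. Unset Strict Implicit. Unset Printing Implicit Defensive.
Local Open Scope classical_set_scope.

Record connectoid (S : Type) := Connectoid {
  cF : set (set S);
  cF_finite : forall F, cF F -> finite_set F;
  cF_union : forall F F', cF F -> cF F' -> F `&` F' !=set0 -> cF (F `|` F');
  cF_empty : cF set0;
  cF_single : forall s : S, cF [set s]
}.

Section Defs.
Variables (S : Type) (c : connectoid S).

Definition connected_set (C : set S) : Prop :=
  forall x y, C x -> C y -> exists F, cF c F /\ F `<=` C /\ F x /\ F y.

Definition component (S' K : set S) : Prop :=
  K `<=` S' /\ connected_set K /\
  (forall K', K `<=` K' -> K' `<=` S' -> connected_set K' -> K' = K).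

Definition necklace (N : set S) : Prop :=
  connected_set N /\
  exists H : nat -> set S,
    (forall n, finite_set (H n) /\ connected_set (H n)) /\
    N = \bigcup_n H n /\
    (forall i j : nat, (H i `&` H j !=set0) <-> (i <= j.+1 /\ j <= i.+1)%N).

(* T is an X-tail of N: a component of N \ X containing all but finitely
   many elements of N (the paper shows such T exists and is unique). *)
Definition tail (N X T : set S) : Prop :=
  component (N `\` X) T /\ finite_set (N `\` T).

Definition necklace_equiv (N N' : set S) : Prop :=
  forall X : set S, finite_set X ->
  forall T T', tail N X T -> tail N' X T' ->
  exists K, component (~` X) K /\ T `<=` K /\ T' `<=` K.

End Defs.

(* Main.v *)
Require Import Defs.
From mathcomp Require Import all_boot.
From mathcomp Require Import boolp classical_sets cardinality.
Set Implicit Arguments. Unset Strict Implicit.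
Local Open Scope classical_set_scope.

Lemma ubound (T : Type) (A : set T) (P : T -> nat -> Prop) :
  finite_set A -> (forall x m m', (m <= m')%N -> P x m -> P x m') ->
  (forall x, A x -> exists m, P x m) -> exists m, forall x, A x -> P x m.
Proof.
move=> fA mono hA.
have /finite_seqP[s sE] : @finite_set {classic T} A by [].
suff: exists m, forall x : {classic T}, x \in s -> P x m.
  move=> [m hm]; exists m => x Ax; apply: hm.
  by have : [set` s] x by rewrite -sE.
have hs : forall x : {classic T}, x \in s -> exists m, P x m.
  by move=> x xs; apply: hA; rewrite sE.
elim: s hs {sE} => [|y s IH] hs; first by exists 0%N.
have [m1 h1] := hs y (mem_head _ _).
have [m2 h2] := IH (fun x xs => hs x (@mem_behead _ (y :: s) x xs)).
exists (maxn m1 m2) => x; rewrite inE => /orP[/eqP->|xs].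
  by apply: mono h1; apply: leq_maxl.
by apply: mono (h2 x xs); apply: leq_maxr.
Qed.

Section S.
Variables (S : Type) (c : connectoid S).

Lemma star (C : set S) z :
  (forall x, C x -> exists F, cF c F /\ F `<=` C /\ F x /\ F z) ->
  connected_set c C.
Proof.
move=> h x y Cx Cy.
have [F1 [cF1 [F1C [F1x F1z]]]] := h x Cx.
have [F2 [cF2 [F2C [F2y F2z]]]] := h y Cy.
exists (F1 `|` F2); split; first by apply: cF_union => //; exists z.
split; last by split; [left|right].
by move=> w [/F1C|/F2C].
Qed.

Lemma conn_union (C1 C2 : set S) z : connected_set c C1 -> connected_set c C2 ->
  C1 z -> C2 z -> connected_set c (C1 `|` C2).
Proof.
move=> h1 h2 z1 z2; apply: (@star _ z) => x [xC|xC].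
  have [F [? [FC ?]]] := h1 x z xC z1; exists F; do !split => //.
  by move=> w /FC; left.
have [F [? [FC ?]]] := h2 x z xC z2; exists F; do !split => //.
by move=> w /FC; right.
Qed.

Definition comp (S' : set S) x : set S :=
  fun y => exists C, connected_set c C /\ C `<=` S' /\ C x /\ C y.

Lemma comp_sub (S' C : set S) x : connected_set c C -> C `<=` S' -> C x ->
  C `<=` comp S' x.
Proof. by move=> cC CS Cx y Cy; exists C. Qed.

Lemma comp_component (S' : set S) x : S' x -> component c S' (comp S' x).
Proof.
move=> Sx.
have cc : connected_set c (comp S' x).
  apply: (@star _ x) => y [C [cC [CS [Cx Cy]]]].
  have [F [cF' [FC [Fy Fx]]]] := cC y x Cy Cx.
  exists F; do !split => //.
  by move=> w /FC Cw; exists C.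
split; first by move=> y [C [_ [CS [_ /CS]]]].
split => // K' sub K'S cK'.
apply/seteqP; split => // y K'y.
exists K'; do !split => //; apply: sub.
exists [set x]; do !split => //.
  by move=> a b -> ->; exists [set x]; do !split => //; exact: cF_single.
by move=> w ->.
Qed.

Lemma cF_conn F : cF c F -> connected_set c F.
Proof. by move=> h x y Fx Fy; exists F; do !split. Qed.

Section Neck.
Variables (N : set S) (H : nat -> set S).
Hypotheses (hH : forall n, finite_set (H n) /\ connected_set c (H n))
  (hN : N = \bigcup_n H n)
  (hI : forall i j : nat, (H i `&` H j !=set0) <-> (i <= j.+1 /\ j <= i.+1)%N).

Lemma H_ne n : exists x, H n x.
Proof. have [_ h] := hI n n; have [x [Hx _]] := h (conj (leqnSn n) (leqnSn n)); by exists x. Qed.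

Lemma H_bound (X : set S) : finite_set X ->
  exists m, forall x, X x -> forall n, (m <= n)%N -> ~ H n x.
Proof.
move=> fX; apply: ubound => //.
  by move=> x m m' le h n len; apply: h; apply: leq_trans len.
move=> x _; case: (pselect (exists i, H i x)) => [[i Hi]|nH]; last first.
  by exists 0%N => n _ Hn; apply: nH; exists n.
exists i.+2 => n len Hn.
have [h _] := hI i n; have [_] := h (ex_intro _ x (conj Hi Hn)).
by rewrite leqNgt len.
Qed.

Definition U a := \bigcup_(n in [set n | (a <= n)%N]) H n.

Lemma chain a x : H a x -> forall k y, H (a + k) y ->
  exists F, cF c F /\ F `<=` U a /\ F x /\ F y.
Proof.
move=> Hx; elim => [|k IH] y.
  rewrite addn0 => Hy; have [_ cH] := hH a.
  have [F [? [FH ?]]] := cH x y Hx Hy; exists F; do !split => //.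
  by move=> w /FH hw; exists a => /=.
move=> Hy.
have [_ hz] := hI (a + k) (a + k.+1).
have [z [Hz1 Hz2]] : H (a + k) `&` H (a + k.+1) !=set0.
  by apply: hz; rewrite addnS; split => //; apply: leqW; apply: leqnSn.
have [F1 [c1 [F1U [F1x F1z]]]] := IH z Hz1.
have [_ cH] := hH (a + k.+1).
have [F2 [c2 [F2H [F2z F2y]]]] := cH z y Hz2 Hy.
exists (F1 `|` F2); split; first by apply: cF_union => //; exists z.
split; last by split; [left|right].
move=> w [/F1U //|/F2H hw]; exists (a + k.+1) => //.
by rewrite /= leq_addr.
Qed.

Lemma U_conn a : connected_set c (U a).
Proof.
have [z Hz] := H_ne a.
apply: (@star _ z) => y [n /= len Hy].
have Hy' : H (a + (n - a)) y by rewrite subnKC.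
have [F [? [FU [Fz Fy]]]] := @chain a z Hz (n - a) y Hy'.
by exists F; do !split.
Qed.

Lemma tail_exists (X : set S) : finite_set X ->
  exists T z, tail c N X T /\ T z.
Proof.
move=> fX; have [m hm] := H_bound fX.
have [z Hz] := H_ne m.
have UNX : U m `<=` N `\` X.
  move=> y [n /= len Hy]; split; first by rewrite hN; exists n => /=.
  by move=> Xy; exact: (hm y Xy n len Hy).
have Umz : U m z by exists m => /=.
have NXz : (N `\` X) z by apply: UNX.
exists (comp (N `\` X) z), z; split; last first.
  exact: (comp_sub (@U_conn m) UNX Umz Umz).
split; first exact: comp_component.
apply: (@sub_finite_set _ _ (\bigcup_(n in `I_m) H n)); last first.
  by apply: bigcup_finite => // i _; case: (hH i).
move=> y [Ny nT]; move: Ny; rewrite hN => -[n _ Hy].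
case: (ltnP n m) => [lt|le]; first by exists n => /=.
exfalso; apply: nT; apply: (comp_sub (@U_conn m) UNX Umz).
by exists n => /=.
Qed.

End Neck.

Lemma neck_tail N X : necklace c N -> finite_set X ->
  exists T z, tail c N X T /\ T z.
Proof.
move=> [_ [H [hH [hN hI]]]]; exact: (tail_exists hH hN hI).
Qed.

Fixpoint accum (g : set S -> set S) n : set S :=
  if n is n'.+1 then accum g n' `|` g (accum g n') else set0.

End S.

Theorem proposition2p1 (S : Type) (c : connectoid S) (N N' : set S) :
  necklace c N -> necklace c N' ->
  (necklace_equiv c N N' <->
   exists C : nat -> set S,
     (forall n, finite_set (C n) /\ connected_set c (C n) /\
                (C n `&` N !=set0) /\ (C n `&` N' !=set0)) /\
     (forall i j : nat, i <> j -> C i `&` C j = set0)).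
Proof.
move=> nN nN'; split.
- move=> heq.
  pose P (F : set S) := finite_set F /\ connected_set c F /\
     (F `&` N !=set0) /\ (F `&` N' !=set0).
  have key0 : forall X, finite_set X -> exists F, P F /\ F `&` X = set0.
    move=> X fX.
    have [T [z [tT Tz]]] := neck_tail nN fX.
    have [T' [z' [tT' Tz']]] := neck_tail nN' fX.
    have [K [compK [TK T'K]]] := heq X fX T T' tT tT'.
    have [KX [cK _]] := compK.
    have [F [cFF [FK [Fz Fz']]]] := cK z z' (TK z Tz) (T'K z' Tz').
    have [[TNX _] _] := tT.
    have [[T'NX _] _] := tT'.
    exists F; split.
      split; first exact: (cF_finite cFF).
      split; first exact: (cF_conn cFF).
      split; first by exists z; split => //; have [] := TNX z Tz.
      by exists z'; split => //; have [] := T'NX z' Tz'.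
    apply/seteqP; split => w // [Fw Xw].
    by have := KX w (FK w Fw).
  have key : forall X, exists F, P F /\ (finite_set X -> F `&` X = set0).
    move=> X; case: (pselect (finite_set X)) => [fX|nfX].
      by have [F [PF e]] := key0 X fX; exists F.
    have [F [PF _]] := key0 set0 (finite_set0 _); exists F; split => // //.
  pose g X := proj1_sig (cid (key X)).
  have hg : forall X, P (g X) /\ (finite_set X -> g X `&` X = set0).
    by move=> X; exact: (proj2_sig (cid (key X))).
  have accfin : forall n, finite_set (accum g n).
    elim => [|n IH] /=; first exact: finite_set0.
    by rewrite finite_setU; split => //; have [[]] := hg (accum g n).
  have accsub : forall i k, g (accum g i) `<=` accum g (i + k.+1).
    move=> i; elim => [|k IH] w gw.
      by rewrite addn1 /=; right.
    by rewrite addnS /=; left; apply: IH.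
  have disj : forall i j, (i < j)%N -> g (accum g i) `&` g (accum g j) = set0.
    move=> i j lt; apply/seteqP; split => w // [w1 w2].
    have e := (hg (accum g j)).2 (accfin j).
    have : (g (accum g j) `&` accum g j) w.
      split => //; have := @accsub i (j - i.+1) w w1.
      by rewrite addnS -addSn subnKC.
    by rewrite e.
  exists (fun n => g (accum g n)); split.
    by move=> n; exact: (hg _).1.
  move=> i j ne; case: (ltngtP i j) => [lt|lt|e]; first exact: disj.
    by rewrite setIC; exact: disj.
  by exfalso; apply: ne.
- move=> [C [hC hD]] X fX T T' tT tT'.
  have fY : finite_set (X `|` (N `\` T) `|` (N' `\` T')).
    rewrite !finite_setU; split; [split => // |].
      by have [_ ?] := tT.
    by have [_ ?] := tT'.
  have ex : forall y, (X `|` (N `\` T) `|` (N' `\` T')) y ->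
      exists m, forall n, (m <= n)%N -> ~ C n y.
    move=> y _; case: (pselect (exists i, C i y)) => [[i Ci]|nC]; last first.
      by exists 0%N => n _ Cn; apply: nC; exists n.
    exists i.+1 => n len Cn.
    have ne : i <> n by move=> e; rewrite e ltnn in len.
    have : (C i `&` C n) y by split.
    by rewrite hD.
  have [m hm] := @ubound _ _ (fun y m => forall n, (m <= n)%N -> ~ C n y) fY
    (fun x m m' le h n len => h n (leq_trans le len)) ex.
  have [_ [cCm [[t [Cmt Nt]] [t' [Cmt' N't']]]]] := hC m.
  have hmm : forall w, C m w -> (X `|` (N `\` T) `|` (N' `\` T')) w -> False.
    by move=> w Cw Yw; exact: (hm w Yw m (leqnn m) Cw).
  have CmX : C m `<=` ~` X.
    by move=> w Cw Xw; apply: (hmm w Cw); left; left.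
  have Tt : T t.
    case: (pselect (T t)) => // nTt; exfalso.
    by apply: (hmm t Cmt); left; right.
  have Tt' : T' t'.
    case: (pselect (T' t')) => // nTt; exfalso.
    by apply: (hmm t' Cmt'); right.
  have [[TNX [cT _]] _] := tT.
  have [[T'NX [cT' _]] _] := tT'.
  have TX : T `<=` ~` X by move=> w /TNX [].
  have T'X : T' `<=` ~` X by move=> w /T'NX [].
  exists (comp c (~` X) t); split; first exact: comp_component (CmX t Cmt).
  split; first exact: (comp_sub cT TX Tt).
  have cD : connected_set c (T' `|` C m) by exact: (conn_union cT' cCm Tt' Cmt').
  have DX : T' `|` C m `<=` ~` X by move=> w [/T'X|/CmX].
  move=> w T'w; apply: (comp_sub cD DX (or_intror Cmt)); by left.
Qed.
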